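(* Let $n\ge 4$. There is no 1-layer transformer with leftmost hard attention, rightmost hard attention, or average hard attention that performs function evaluation for domain $[n]$ in the ''consecutive positions, permuted keys'' presentation. This holds for any token embedding, position embedding, embedding dimension, MLP layers and unembedding. Here performing function evaluation means that, for every $f:[n]\to[n]$, every permutation $\pi$ of $[n]$ and every $i^*\in[n]$, the transformer outputs $f(i^* )$ on the input sequence $\pi(0),f(\pi(0)),\pi(1),f(\pi(1)),\dots,\pi(n-1),f(\pi(n-1)),i^*$.
   Context: Notation: $[n]=\{0,\dots,n-1\}$. Transformer model (encoder-only, no masking). A transformer consists of three parts. - An input embedding sends position $i$ with token $x_i$ to $\mathbf{w}(x_i)+\mathbf{p}(i)\in\mathbb{R}^d$. - One attention layer (possibly with residual connection) follows, together with any number of position-wise MLP layers. - The output is the index in $[n]$ maximizing $\mathbf{U}\mathbf{Y}[L-1]$, where $\mathbf{Y}[L-1]$ is the final vector at the last position and $\mathbf{U}\in\mathbb{R}^{n\times d}$. Attention computes the scores $s[i,j]=(\mathbf{W}^Q\mathbf{X}[i])\cdot(\mathbf{W}^K\mathbf{X}[j])/\sqrt{d_{hid}}$ and outputs $\sum_j\alpha[i,j]\mathbf{W}^V\mathbf{X}[j]$. Let $M_i$ be the set of $j$ maximizing $s[i,j]$. - Leftmost hard attention: $\alpha[i,j]=1$ iff $j=\min M_i$, and $0$ otherwise. - Rightmost hard attention: $\alpha[i,j]=1$ iff $j=\max M_i$, and $0$ otherwise. - Average hard attention: $\alpha[i,j]=1/|M_i|$ for $j\in M_i$, and $0$ otherwise.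 *)

(* Defs.v *)
From HB Require Import structures.
From mathcomp Require Import all_boot all_order all_algebra all_fingroup.
From mathcomp Require Import reals.
Set Implicit Arguments.
Unset Strict Implicit.
Unset Printing Implicit Defensive.
Import Order.TTheory GRing.Theory Num.Theory.
Local Open Scope ring_scope.

Inductive attn_kind := Leftmost | Rightmost | Average.

Section Transformer.
Variable R : realType.

Definition relu_cv (h : nat) (v : 'cV[R]_h) : 'cV[R]_h :=
  \col_i Num.max (v i 0) 0.

Record mlp_layer (d : nat) := MLPLayer {
  mlp_hid : nat;
  mlp_W1 : 'M[R]_(mlp_hid, d);
  mlp_b1 : 'cV[R]_mlp_hid;
  mlp_W2 : 'M[R]_(d, mlp_hid);
  mlp_b2 : 'cV[R]_d;
  mlp_res : bool }.

Definition mlp_apply (d : nat) (l : mlp_layer d) (x : 'cV[R]_d) : 'cV[R]_d :=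
  mlp_W2 l *m relu_cv (mlp_W1 l *m x + mlp_b1 l) + mlp_b2 l
  + (if mlp_res l then x else 0).

Record transformer (n : nat) := Transformer {
  tf_d : nat;
  tf_w : 'I_n -> 'cV[R]_tf_d;
  tf_p : 'I_(2 * n).+1 -> 'cV[R]_tf_d;
  tf_dh : nat;
  tf_WQ : 'M[R]_(tf_dh, tf_d);
  tf_WK : 'M[R]_(tf_dh, tf_d);
  tf_WV : 'M[R]_(tf_d, tf_d);
  tf_res : bool;
  tf_mlp : seq (mlp_layer tf_d);
  tf_U : 'M[R]_(n, tf_d) }.

Variable n : nat.
Local Notation L := (2 * n).+1.

Definition tf_X (T : transformer n) (x : 'I_L -> 'I_n) (i : 'I_L)
  : 'cV[R]_(tf_d T) := tf_w T (x i) + tf_p T i.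

Definition tf_score (T : transformer n) (x : 'I_L -> 'I_n) (i j : 'I_L) : R :=
  (((tf_WQ T *m tf_X T x i)^T *m (tf_WK T *m tf_X T x j)) 0 0)
    / Num.sqrt ((tf_dh T)%:R).

Definition tf_M (T : transformer n) (x : 'I_L -> 'I_n) (i : 'I_L) : {set 'I_L} :=
  [set j | [forall j', tf_score T x i j' <= tf_score T x i j]].

Definition tf_alpha (k : attn_kind) (T : transformer n) (x : 'I_L -> 'I_n)
  (i j : 'I_L) : R :=
  let M := tf_M T x i in
  match k with
  | Leftmost =>
      if (j \in M) && [forall j' in M, (j <= j')%N] then 1 else 0
  | Rightmost =>
      if (j \in M) && [forall j' in M, (j' <= j)%N] then 1 else 0
  | Average => if j \in M then (#|M|%:R)^-1 else 0
  end.

Definition tf_attn (k : attn_kind) (T : transformer n) (x : 'I_L -> 'I_n)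
  (i : 'I_L) : 'cV[R]_(tf_d T) :=
  \sum_j tf_alpha k T x i j *: (tf_WV T *m tf_X T x j)
  + (if tf_res T then tf_X T x i else 0).

Definition tf_logits (k : attn_kind) (T : transformer n) (x : 'I_L -> 'I_n)
  : 'cV[R]_n :=
  tf_U T *m foldl (fun v l => mlp_apply l v) (tf_attn k T x ord_max) (tf_mlp T).

Definition tf_outputs (k : attn_kind) (T : transformer n) (x : 'I_L -> 'I_n)
  (y : 'I_n) : Prop :=
  forall z : 'I_n, z != y -> tf_logits k T x z 0 < tf_logits k T x y 0.

End Transformer.

Definition fe_input (n : nat) (f : 'I_n -> 'I_n) (pi : {perm 'I_n}) (istar : 'I_n)
  : 'I_(2 * n).+1 -> 'I_n :=
  fun j => nth istar
    (flatten [seq [:: pi k; f (pi k)] | k <- enum 'I_n] ++ [:: istar]) j.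

Definition performs_fe (R : realType) (n : nat) (k : attn_kind)
  (T : transformer R n) : Prop :=
  forall (f : 'I_n -> 'I_n) (pi : {perm 'I_n}) (istar : 'I_n),
    tf_outputs k T (fe_input f pi istar) (f istar).

(* Main.v *)
Require Import Defs.
From mathcomp Require Import all_boot all_order all_algebra all_fingroup.
From mathcomp Require Import reals.
From mathcomp Require Import zify.
Set Implicit Arguments.
Unset Strict Implicit.
Unset Printing Implicit Defensive.
Import Order.TTheory GRing.Theory Num.Theory.
Local Open Scope ring_scope.

Lemma exists_max (R : realType) (I : finType) (i0 : I) (F : I -> R) :
  exists i, forall j, F j <= F i.
Proof.
case: (@arg_maxP _ R I i0 predT F isT) => i _ H.
by exists i => j; apply: H.
Qed.

Section Seqs.
Variables (T A : Type) (g h h' : T -> A).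

Lemma nth_flat_even (d : A) (s : seq T) (r : seq A) (j : nat) :
  ~~ odd j ->
  nth d (flatten [seq [:: g t; h t] | t <- s] ++ r) j =
  nth d (flatten [seq [:: g t; h' t] | t <- s] ++ r) j.
Proof.
elim: s j => [|t s IH] [|[|j]] //= Hj.
by apply: IH; move: Hj; rewrite /= negbK.
Qed.

Lemma nth_flat_odd (d : A) (d0 : T) (s : seq T) (r : seq A) (k : nat) :
  (k < size s)%N ->
  nth d (flatten [seq [:: g t; h t] | t <- s] ++ r) (2 * k).+1 = h (nth d0 s k).
Proof.
elim: s k => [|t s IH] [|k] Hk //.
rewrite (_ : (2 * k.+1).+1 = ((2*k).+1).+2); last by rewrite mulnS.
cbn [nth map flatten foldr cat]. by rewrite IH.
Qed.

Lemma size_flat (s : seq T) :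
  size (flatten [seq [:: g t; h t] | t <- s]) = (2 * size s)%N.
Proof. by elim: s => [|t s IH] //=; rewrite IH mulnS. Qed.
End Seqs.

Definition posO (n : nat) (k : 'I_n) : 'I_(2 * n).+1.
Proof. refine (@Ordinal _ (2 * k).+1 _). have := ltn_ord k. lia. Defined.

Lemma fe_last n f (pi : {perm 'I_n}) istar :
  fe_input f pi istar ord_max = istar.
Proof.
rewrite /fe_input nth_cat size_flat size_enum_ord /= ltnn subnn //.
Qed.

Lemma fe_pos n f (pi : {perm 'I_n}) istar (k : 'I_n) :
  fe_input f pi istar (posO k) = f (pi k).
Proof.
by rewrite /fe_input /= (nth_flat_odd _ _ _ k) ?size_enum_ord // nth_ord_enum.
Qed.

Lemma fe_cases n (pi : {perm 'I_n}) istar (j : 'I_(2 * n).+1) :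
  (exists k : 'I_n, j = posO k) \/
  (forall f f', fe_input f pi istar j = fe_input f' pi istar j).
Proof.
case Hj: (odd j).
  left. have Hk : (j./2 < n)%N.
    have := ltn_ord j; have := odd_double_half j; rewrite Hj -muln2. lia.
  exists (Ordinal Hk); apply: val_inj => /=.
  have := odd_double_half j; rewrite Hj -muln2. lia.
right => f f'; rewrite /fe_input.
by apply: nth_flat_even; rewrite Hj.
Qed.

Section TF.
Variables (R : realType) (n : nat).
Local Notation L := (2 * n).+1.
Implicit Types (T : transformer R n) (x : 'I_L -> 'I_n).

Definition G T (q : 'I_n) (j : 'I_L) (t : 'I_n) : R :=
  (((tf_WQ T *m (tf_w T q + tf_p T ord_max))^T *m (tf_WK T *m (tf_w T t + tf_p T j))) 0 0)
    / Num.sqrt ((tf_dh T)%:R).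

Lemma scoreE T x j : tf_score T x ord_max j = G T (x ord_max) j (x j).
Proof. by []. Qed.

Lemma inM T x j : (j \in tf_M T x ord_max) =
  [forall j', tf_score T x ord_max j' <= tf_score T x ord_max j].
Proof. by rewrite inE. Qed.

Lemma inM_same T x j j' : tf_score T x ord_max j = tf_score T x ord_max j' ->
  (j \in tf_M T x ord_max) = (j' \in tf_M T x ord_max).
Proof. by move=> E; rewrite !inM E. Qed.

Lemma M_eq T x x' : (forall j, tf_score T x ord_max j = tf_score T x' ord_max j) ->
  tf_M T x ord_max = tf_M T x' ord_max.
Proof.
move=> E; apply/setP => j; rewrite !inM.
by apply: eq_forallb => j'; rewrite !E.
Qed.

Lemma alpha_eq k T x x' : tf_M T x ord_max = tf_M T x' ord_max ->
  forall j, tf_alpha k T x ord_max j = tf_alpha k T x' ord_max j.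
Proof. by move=> E j; rewrite /tf_alpha E. Qed.

Lemma alpha_notM k T x j : j \notin tf_M T x ord_max -> tf_alpha k T x ord_max j = 0.
Proof. by move=> /negbTE H; rewrite /tf_alpha; case: k; rewrite H. Qed.

Lemma attn_eq0 k T x x' : x ord_max = x' ord_max ->
  tf_M T x ord_max = tf_M T x' ord_max ->
  (forall j, x j != x' j -> tf_alpha k T x ord_max j = 0) ->
  tf_attn k T x ord_max = tf_attn k T x' ord_max.
Proof.
move=> Hl HM Hz; rewrite /tf_attn /tf_X Hl; congr (_ + _).
apply: eq_bigr => j _; rewrite -(alpha_eq k HM).
case: (eqVneq (x j) (x' j)) => [->//|/Hz ->]; by rewrite !scale0r.
Qed.

Lemma score_same T x x' j : x ord_max = x' ord_max -> x j = x' j ->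
  tf_score T x ord_max j = tf_score T x' ord_max j.
Proof. by move=> H1 H2; rewrite !scoreE H1 H2. Qed.

Lemma attn_L1 k T x x' j0 : x ord_max = x' ord_max -> x j0 = x' j0 ->
  (forall j, tf_score T x ord_max j <= tf_score T x ord_max j0) ->
  (forall j, x j != x' j -> tf_score T x ord_max j < tf_score T x ord_max j0 /\
                            tf_score T x' ord_max j < tf_score T x ord_max j0) ->
  tf_attn k T x ord_max = tf_attn k T x' ord_max.
Proof.
move=> Hl H0 Hmax Hd.
have E0 := score_same T Hl H0.
have HM j : (j \in tf_M T x ord_max) = (tf_score T x ord_max j0 <= tf_score T x ord_max j).
  rewrite inM; apply/forallP/idP => [/(_ j0)//|H j']; exact: le_trans (Hmax j') H.
have HM' j : (j \in tf_M T x' ord_max) = (tf_score T x ord_max j0 <= tf_score T x' ord_max j).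
  rewrite inM; apply/forallP/idP => [/(_ j0)|H j']; first by rewrite -E0.
  apply: le_trans H; case: (eqVneq (x j') (x' j')) => [E|/Hd [_ /ltW //]].
  by rewrite -(score_same T Hl E).
have HMM : tf_M T x ord_max = tf_M T x' ord_max.
  apply/setP => j; rewrite HM HM'.
  case: (eqVneq (x j) (x' j)) => [E|/Hd [H1 H2]]; first by rewrite (score_same T Hl E).
  by rewrite !leNgt H1 H2.
apply: attn_eq0 => // j /Hd [H1 _]; apply: alpha_notM.
by rewrite HM -ltNge.
Qed.

Lemma attn_swap T x x' p1 p2 : x ord_max = x' ord_max ->
  tf_M T x ord_max = tf_M T x' ord_max -> p1 != p2 ->
  tf_alpha Average T x ord_max p1 = tf_alpha Average T x ord_max p2 ->
  x p1 = x' p2 -> x p2 = x' p1 ->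
  (forall j, j != p1 -> j != p2 -> x j = x' j) ->
  tf_attn Average T x ord_max = tf_attn Average T x' ord_max.
Proof.
move=> Hl HM Hp Ha E1 E2 Eo; rewrite /tf_attn /tf_X Hl; congr (_ + _).
rewrite (bigD1 p1) // (bigD1 p1 (P := predT)) //=.
rewrite (bigD1 p2) 1?eq_sym // (bigD1 p2 (P := fun i => predT i && (i != p1))) /= 1?eq_sym //.
rewrite !addrA; congr (_ + _).
  move: Ha; rewrite /tf_alpha /= -HM => Ha.
  rewrite Ha -E1 -E2 -!scalerDr; congr (_ *: _).
  rewrite !mulmxDr addrACA [in RHS]addrACA; congr (_ + _); exact: addrC.
rewrite -HM; apply: eq_bigr => j /andP [H1 H2].
by rewrite Eo.
Qed.

Lemma two_outputs k T x x' y y' : y != y' ->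
  tf_attn k T x ord_max = tf_attn k T x' ord_max ->
  tf_outputs k T x y -> tf_outputs k T x' y' -> False.
Proof.
move=> Hy Ha H1 H2.
have A := H1 y' ltac:(by rewrite eq_sym); have B := H2 y Hy.
move: A B; rewrite /tf_logits Ha => A B.
by have := lt_trans A B; rewrite ltxx.
Qed.
End TF.

Theorem theorem6 (R : realType) (n : nat) (hn : (4 <= n)%N) (k : attn_kind)
  (T : transformer R n) : ~ performs_fe k T.
Proof.
move=> H.
have n0 : (0 < n)%N by lia.
pose istar : 'I_n := Ordinal n0.
pose inp f (m : 'I_n) := fe_input f (tperm m istar) istar.
have Hlast f m : inp f m ord_max = istar by apply: fe_last.
have Hpos f m k' : inp f m (posO k') = f (tperm m istar k') by apply: fe_pos.
have Hpm m : tperm m istar m = istar by apply: tpermL.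
have Hpk m k' : k' != m -> tperm m istar k' != istar.
  move=> Hk; apply: contra Hk => /eqP E.
  by apply/eqP; apply: (@perm_inj _ (tperm m istar)); rewrite E Hpm.
have Hsc f m j : tf_score T (inp f m) ord_max j = G T istar j (inp f m j).
  by rewrite scoreE Hlast.
have Hout f m : tf_outputs k T (inp f m) (f istar) by apply: H.
pose tau k' t := G T istar (posO k') t.
have [[k0 t0] Hmax] := exists_max (istar, istar) (fun p : 'I_n * 'I_n => tau p.1 p.2).
pose C := tau k0 t0.
have Hle m t : tau m t <= C by apply: (Hmax (m, t)).
have Hsm f m : tf_score T (inp f m) ord_max (posO m) = tau m (f istar).
  by rewrite Hsc Hpos Hpm.
have only_m f f' m : (forall i, i != istar -> f i = f' i) ->
    forall j, inp f m j != inp f' m j -> j = posO m.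
  move=> Hf j Hj.
  case: (fe_cases (tperm m istar) istar j) => [[k' Ek]|E]; last by rewrite /inp (E f f') eqxx in Hj.
  rewrite Ek in Hj *; case: (eqVneq k' m) => [->//|/Hpk Hk'].
  by rewrite !Hpos Hf ?eqxx in Hj.
case: (boolP [exists m, exists a, exists a', [&& m != k0, a != a', tau m a < C & tau m a' < C]]).
  case/existsP => m /existsP [a /existsP [a' /and4P [Hm Ha Hla Hla']]].
  pose fa (b : 'I_n) := fun i => if i == istar then b else t0.
  have Hfa b : fa b istar = b by rewrite /fa eqxx.
  have O := Hout (fa a) m; have O' := Hout (fa a') m; rewrite Hfa in O; rewrite Hfa in O'.
  apply: (two_outputs Ha _ O O').
  have [j0 Hj0] := exists_max ord_max (fun j => tf_score T (inp (fa a) m) ord_max j).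
  have Hfe : forall i, i != istar -> fa a i = fa a' i by move=> i Hi; rewrite /fa (negbTE Hi).
  have HC : C <= tf_score T (inp (fa a) m) ord_max j0.
    apply: le_trans (Hj0 (posO k0)).
    by rewrite Hsc Hpos /fa (negbTE (Hpk _ _ _)) // eq_sym.
  apply: (@attn_L1 _ _ _ _ _ _ j0).
  + by rewrite !Hlast.
  + apply/eqP; apply: contraT => /(only_m _ _ _ Hfe) Ej0.
    move: HC; rewrite Ej0 Hsm Hfa => HC.
    by have := lt_le_trans Hla HC; rewrite ltxx.
  + exact: Hj0.
  + move=> j /(only_m _ _ _ Hfe) ->; rewrite !Hsm !Hfa.
    by split; apply: lt_le_trans HC.
rewrite negb_exists => /forallP Hno.
have Hno' m a a' : m != k0 -> a != a' -> C <= tau m a \/ C <= tau m a'.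
  move=> Hm Haa; have := Hno m; rewrite negb_exists => /forallP /(_ a).
  rewrite negb_exists => /forallP /(_ a'); rewrite Hm Haa /= negb_and -!leNgt.
  by case/orP; auto.
have Heq m t : C <= tau m t -> tau m t = C.
  by move=> h; apply/eqP; rewrite eq_le Hle h.
pose good m := [set t | C <= tau m t].
have Hbad m : m != k0 -> (#|~: good m| <= 1)%N.
  move=> Hm; rewrite leqNgt; apply/negP => /card_gt1P [a [a' [Ha Ha' Haa]]].
  move: Ha Ha'; rewrite !inE.
  by case: (Hno' m a a' Hm Haa) => ->.
have Hgood2 m1 m2 : m1 != k0 -> m2 != k0 -> (1 < #|good m1 :&: good m2|)%N.
  move=> H1 H2; have := cardsC (good m1 :&: good m2); rewrite setCI card_ord.
  have := cardsU (~: good m1) (~: good m2).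
  have := Hbad _ H1; have := Hbad _ H2. lia.
have Hg1 m : exists g, C <= tau m g.
  case: (eqVneq m k0) => [->|Hm]; first by exists t0.
  have /card_gt1P [g [_ [Hg _ _]]] := Hgood2 m m Hm Hm.
  by exists g; move: Hg; rewrite !inE => /andP [].
have Hg2 m1 m2 : m1 != k0 -> m2 != k0 -> exists a b,
    [/\ a != b, C <= tau m1 a, C <= tau m2 a, C <= tau m1 b & C <= tau m2 b].
  move=> H1 H2; have /card_gt1P [a [b [Ha Hb Hab]]] := Hgood2 m1 m2 H1 H2.
  exists a, b; move: Ha Hb; rewrite !inE => /andP [? ?] /andP [? ?]; by split.
have single : forall (m j1 : 'I_n) (a a' g : 'I_n), m != k0 -> j1 != m -> a != a' ->
    C <= tau m a -> C <= tau m a' -> C <= tau j1 g ->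
    (forall x, posO j1 \in tf_M T x ord_max -> tf_alpha k T x ord_max (posO m) = 0) -> False.
  move=> m j1 a a' g Hm Hj1 Haa Ha Ha' Hg Hkind.
  pose fa (b : 'I_n) := fun i => if i == istar then b else g.
  have Hfa b : fa b istar = b by rewrite /fa eqxx.
  have O := Hout (fa a) m; have O' := Hout (fa a') m; rewrite Hfa in O; rewrite Hfa in O'.
  apply: (two_outputs Haa _ O O').
  have Hfe : forall i, i != istar -> fa a i = fa a' i by move=> i Hi; rewrite /fa (negbTE Hi).
  have Hsame : forall j, tf_score T (inp (fa a) m) ord_max j = tf_score T (inp (fa a') m) ord_max j.
    move=> j; case: (eqVneq (inp (fa a) m j) (inp (fa a') m j)) => [E|].
      by apply: score_same => //; rewrite !Hlast.
    move/(only_m _ _ _ Hfe) ->; rewrite !Hsm !Hfa.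
    by rewrite (Heq _ _ Ha) (Heq _ _ Ha').
  apply: attn_eq0; first by rewrite !Hlast.
    exact: M_eq.
  move=> j /(only_m _ _ _ Hfe) ->.
  case: (boolP (posO m \in tf_M T (inp (fa a) m) ord_max)) => Hin; last exact: alpha_notM.
  apply: Hkind; rewrite (inM_same (j' := posO m)) //.
  rewrite Hsm Hfa (Heq _ _ Ha) Hsc Hpos /fa (negbTE (Hpk _ _ Hj1)).
  exact: Heq.
have Hn1 : (n.-1 < n)%N by lia.
have Hn2 : (n.-2 < n)%N by lia.
have H1n : (1 < n)%N by lia.
have H2n : (2 < n)%N by lia.
have neqv (u v : 'I_n) : val u != val v -> u != v.
  by apply: contra => /eqP ->.
case: k H Hout single => H Hout single.
-
  have [m [Hm Hm2]] : exists m : 'I_n, m != k0 /\ (2 <= m)%N.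
    case: (eqVneq k0 (Ordinal Hn1)) => E; [exists (Ordinal Hn2) | exists (Ordinal Hn1)].
      split; last by rewrite /=; lia.
      by rewrite E; apply: neqv => /=; apply/eqP; lia.
    by split; [rewrite eq_sym | rewrite /=; lia].
  have [a [a' [Haa Ha _ Ha' _]]] := Hg2 m m Hm Hm.
  have [g Hg] := Hg1 istar.
  apply: (single m istar a a' g Hm _ Haa Ha Ha' Hg).
    by apply: neqv => /=; apply/eqP; lia.
  move=> x Hj1; rewrite /tf_alpha; case: ifP => // /andP [_ /forall_inP /(_ _ Hj1)].
  by rewrite /=; lia.
-
  have [m [Hm Hm2]] : exists m : 'I_n, m != k0 /\ (m <= 1)%N.
    case: (eqVneq k0 istar) => E; [exists (Ordinal H1n) | exists istar].
      split; last by [].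
      by rewrite E; apply: neqv.
    by split; [rewrite eq_sym | ].
  have [a [a' [Haa Ha _ Ha' _]]] := Hg2 m m Hm Hm.
  have [g Hg] := Hg1 (Ordinal Hn1).
  apply: (single m (Ordinal Hn1) a a' g Hm _ Haa Ha Ha' Hg).
    by apply: neqv => /=; apply/eqP; lia.
  move=> x Hj1; rewrite /tf_alpha; case: ifP => // /andP [_ /forall_inP /(_ _ Hj1)].
  by rewrite /=; lia.
-
  have [m1 [m2 [H1 H2 H12]]] : exists m1 m2 : 'I_n, [/\ m1 != k0, m2 != k0 & m1 != m2].
    pose o1 := Ordinal H1n; pose o2 := Ordinal H2n.
    case: (eqVneq k0 istar) => E0.
      by exists o1, o2; rewrite E0; split; apply: neqv.
    case: (eqVneq k0 o1) => E1.
      by exists istar, o2; rewrite E1; split; apply: neqv.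
    by exists istar, o1; split; [rewrite eq_sym | rewrite eq_sym | apply: neqv].
  have [a [b [Hab Ha1 Ha2 Hb1 Hb2]]] := Hg2 m1 m2 H1 H2.
  pose s := tperm m1 istar m2.
  have Hs : s != istar by apply: Hpk; rewrite eq_sym.
  pose fab (u v : 'I_n) := fun i => if i == istar then u else if i == s then v else a.
  have Hf u v : fab u v istar = u by rewrite /fab eqxx.
  have O := Hout (fab a b) m1; have O' := Hout (fab b a) m1; rewrite Hf in O; rewrite Hf in O'.
  apply: (two_outputs Hab _ O O').
  have Hx2 u v : inp (fab u v) m1 (posO m2) = v.
    by rewrite Hpos -/s /fab (negbTE Hs) eqxx.
  have Hx1 u v : inp (fab u v) m1 (posO m1) = u by rewrite Hpos Hpm Hf.
  have Hoth : forall j, j != posO m1 -> j != posO m2 ->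
      inp (fab a b) m1 j = inp (fab b a) m1 j.
    move=> j Hj1 Hj2.
    case: (fe_cases (tperm m1 istar) istar j) => [[k' Ek]|E]; last exact: E.
    rewrite Ek in Hj1 Hj2 *; rewrite !Hpos /fab.
    have Hk1 : k' != m1 by apply: contra Hj1 => /eqP ->.
    have Hk2 : tperm m1 istar k' != s.
      by apply: contra Hj2 => /eqP E; apply/eqP; congr posO; exact: perm_inj E.
    by rewrite (negbTE (Hpk _ _ Hk1)) (negbTE Hk2).
  have Hsc2 u v : tf_score T (inp (fab u v) m1) ord_max (posO m2) = tau m2 v.
    by rewrite Hsc Hx2.
  have Hsame j : tf_score T (inp (fab a b) m1) ord_max j = tf_score T (inp (fab b a) m1) ord_max j.
    case: (eqVneq j (posO m1)) => [->|Hj1].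
      by rewrite !Hsm !Hf (Heq _ _ Ha1) (Heq _ _ Hb1).
    case: (eqVneq j (posO m2)) => [->|Hj2].
      by rewrite !Hsc2 (Heq _ _ Ha2) (Heq _ _ Hb2).
    by apply: score_same; [rewrite !Hlast | apply: Hoth].
  have HM := M_eq Hsame.
  apply: (@attn_swap _ _ _ _ _ (posO m1) (posO m2)) => //.
  + by rewrite !Hlast.
  + apply: contra H12 => /eqP E; apply/eqP; apply: val_inj.
    by move: (congr1 val E) => /=; lia.
  + rewrite /tf_alpha /= (@inM_same _ _ _ _ _ (posO m2)) //.
    by rewrite Hsm Hf Hsc2 (Heq _ _ Ha1) (Heq _ _ Hb2).
  + by rewrite !Hx1 !Hx2.
  + by rewrite !Hx1 !Hx2.
Qed.
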